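(* Let $\mathcal{X}_{k|k-1}\subset\mathbb{R}^n$ and $\mathcal{V}_k\subset\mathbb{R}^r$ be constrained zonotopes and $y_k\in\mathbb{R}^m$. Let $h:\mathbb{R}^n\times\mathbb{R}^r\to\mathbb{R}^m$ and write it as $\varrho^{\rm h}:\mathbb{R}^{n+r}\to\mathbb{R}^m$, $\varrho^{\rm h}(z)=h(x,v)$ for $z=[x^\top\ v^\top]^\top$. Let $\mathcal{Z}_k=\mathcal{X}_{k|k-1}\times\mathcal{V}_k$, let $\mathcal{P}_k\supseteq\mathcal{Z}_k$ be a convex polytope, and suppose $\varrho^{\rm h}=\varrho^{\rm ha}-\varrho^{\rm hb}$ on $\mathcal{P}_k$ where $\varrho^{\rm ha},\varrho^{\rm hb}$ are differentiable and componentwise convex on $\mathcal{P}_k$. Let $\bar z\in\mathcal{P}_k$, let $H=\nabla_z\varrho^{\rm h}(\bar z)=[H^{\rm x}\ H^{\rm v}]$ with $H^{\rm x}=\nabla_x\varrho^{\rm h}(\bar z)$, $H^{\rm v}=\nabla_v\varrho^{\rm h}(\bar z)$, and define $\bar\varrho(z)=\varrho^{\rm h}(\bar z)+H(z-\bar z)$, $\bar\varrho^{\rm a}(z)=\varrho^{\rm ha}(\bar z)+\nabla_z\varrho^{\rm ha}(\bar z)(z-\bar z)$, $\bar\varrho^{\rm b}(z)=\varrho^{\rm hb}(\bar z)+\nabla_z\varrho^{\rm hb}(\bar z)(z-\bar z)$. For $i=1,\ldots,m$ let $$e^-_i=\min_{z\in\mathrm{vert}(\mathcal{P}_k)}\big(\bar\varrho^{\rm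 a}_i(z)-\varrho^{\rm hb}_i(z)-\bar\varrho_i(z)\big),\qquad e^+_i=\max_{z\in\mathrm{vert}(\mathcal{P}_k)}\big(\varrho^{\rm ha}_i(z)-\bar\varrho^{\rm b}_i(z)-\bar\varrho_i(z)\big),$$ and let $\mathcal{R}_k$ be the zonotope $\{\mathrm{diag}(\tfrac12(e^+-e^-)),\tfrac12(e^-+e^+)\}$ (the box $[e^-,e^+]$). Define the constrained zonotope $\mathcal{Y}_k=\big(y_k-\varrho^{\rm h}(\bar z)+H\bar z\big)\oplus(-H^{\rm v}\mathcal{V}_k)\oplus(-\mathcal{R}_k)$. Then $$\{x\in\mathcal{X}_{k|k-1}:\ y_k=h(x,v)\ \text{for some } v\in\mathcal{V}_k\}\subseteq\breve{\mathcal{X}}_k:=\mathcal{X}_{k|k-1}\cap_{H^{\rm x}}\mathcal{Y}_k,$$ and $\breve{\mathcal{X}}_k$ is a constrained zonotope.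
   Context: A constrained zonotope (CZ) is a set $\{G,c,A,b\}=\{G\xi+c:\xi\in[-1,1]^{n_g},\ A\xi=b\}$; a zonotope $\{G,c\}$ has no equality constraints. $\oplus$ is Minkowski sum (vectors treated as singletons), $L\mathcal{X}=\{Lx:x\in\mathcal{X}\}$, $-\mathcal{X}=\{-x:x\in\mathcal{X}\}$, $\times$ is Cartesian product. The generalized intersection is $\mathcal{X}\cap_M\mathcal{W}=\{x\in\mathcal{X}:Mx\in\mathcal{W}\}$. $\mathrm{vert}(\mathcal{P})$ is the vertex set of the polytope $\mathcal{P}$. Vector-valued convexity is componentwise; $\nabla_x$ denotes the Jacobian with respect to the block $x$. *)

(* Defs.v *)
From HB Require Import structures.
From mathcomp Require Import all_boot all_order all_algebra.
From mathcomp Require Import all_classical all_reals.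
From mathcomp Require Import topology normedtype derive.
Set Implicit Arguments. Unset Strict Implicit. Unset Printing Implicit Defensive.
Import Order.TTheory GRing.Theory Num.Theory.
Import numFieldNormedType.Exports.
Local Open Scope classical_set_scope.
Local Open Scope ring_scope.

Section Defs.
Variable R : realType.

(* Constrained zonotope {G,c,A,b} (row-vector convention, i.e. the transpose of
   the paper's column convention):  { xi *m G + c : xi in [-1,1]^ng, xi *m A = b } *)
Definition CZset n ng nc (G : 'M[R]_(ng, n)) (c : 'rV[R]_n)
    (A : 'M[R]_(ng, nc)) (b : 'rV[R]_nc) : set 'rV[R]_n :=
  [set x | exists xi : 'rV[R]_ng,
      (forall j, -1 <= xi 0 j <= 1) /\ xi *m A = b /\ x = xi *m G + c].

Definition Zset n ng (G : 'M[R]_(ng, n)) (c : 'rV[R]_n) : set 'rV[R]_n :=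
  CZset G c (0 : 'M[R]_(ng, 0)) 0.

Definition is_CZ n (X : set 'rV[R]_n) : Prop :=
  exists ng nc (G : 'M[R]_(ng, n)) (c : 'rV[R]_n) (A : 'M[R]_(ng, nc)) b,
    X = CZset G c A b.

Definition msum n (X W : set 'rV[R]_n) : set 'rV[R]_n :=
  [set x + w | x in X & w in W].
Definition mx_img n p (L : 'M[R]_(n, p)) (X : set 'rV[R]_n) : set 'rV[R]_p :=
  (fun x => x *m L) @` X.
Definition sneg n (X : set 'rV[R]_n) : set 'rV[R]_n := (fun x => - x) @` X.
Definition cprod n r (X : set 'rV[R]_n) (V : set 'rV[R]_r) : set 'rV[R]_(n + r) :=
  [set z | X (lsubmx z) /\ V (rsubmx z)].
Definition ginter n p (X : set 'rV[R]_n) (M : 'M[R]_(n, p)) (W : set 'rV[R]_p)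
  : set 'rV[R]_n := [set x | X x /\ W (x *m M)].

Definition conv_hull n (S : seq 'rV[R]_n) : set 'rV[R]_n :=
  [set z | exists w : 'I_(size S) -> R, (forall i, 0 <= w i) /\
     \sum_(i < size S) w i = 1 /\ z = \sum_(i < size S) w i *: S`_i].

Definition is_vertex n (P : set 'rV[R]_n) (z : 'rV[R]_n) : Prop :=
  P z /\ forall x y t, P x -> P y -> 0 < t < 1 ->
    z = t *: x + (1 - t) *: y -> x = y.

Definition convex_set n (P : set 'rV[R]_n) : Prop :=
  forall x y t, P x -> P y -> 0 <= t <= 1 -> P (t *: x + (1 - t) *: y).

Definition cw_convex_on n m (P : set 'rV[R]_n) (f : 'rV[R]_n -> 'rV[R]_m) : Prop :=
  forall (i : 'I_m) x y t, P x -> P y -> 0 <= t <= 1 ->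
    f (t *: x + (1 - t) *: y) 0 i <= t * f x 0 i + (1 - t) * f y 0 i.

Definition differentiable_on n m (P : set 'rV[R]_n) (f : 'rV[R]_n -> 'rV[R]_m) :=
  forall z, P z -> differentiable f z.

Definition lin_approx n m (f : 'rV[R]_n -> 'rV[R]_m) (zb z : 'rV[R]_n) : 'rV[R]_m :=
  f zb + (z - zb) *m jacobian f zb.

End Defs.

(* Main.v *)
Require Import Defs.
From HB Require Import structures.
From mathcomp Require Import all_boot all_order all_algebra.
From mathcomp Require Import all_classical all_reals.
From mathcomp Require Import topology normedtype derive.
From mathcomp Require Import ring lra.
Import Order.TTheory GRing.Theory Num.Theory.
Import numFieldNormedType.Exports.
Local Open Scope classical_set_scope.
Local Open Scope ring_scope.


Lemma first_order (R : realType) N m (f : 'rV[R]_N -> 'rV[R]_m) (P : set 'rV[R]_N) zb z (i : 'I_m) :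
  convex_set P -> cw_convex_on P f -> differentiable f zb -> P zb -> P z ->
  lin_approx f zb z 0 i <= f z 0 i.
Proof.
move=> cP cf df Pzb Pz.
set v := z - zb.
have dv : derivable f zb v by apply: diff_derivable.
have L : (fun h : R => (h^-1 *: ((f \o shift zb) (h *: v) - f zb)) 0 i) @ 0^' --> ('D_v f zb) 0 i.
  apply: (continuous_cvg _ (@coord_continuous _ _ _ _ _ _)).
  exact: dv.
have L' : (fun h : R => (h^-1 *: ((f \o shift zb) (h *: v) - f zb)) 0 i) @ 0^'+ --> ('D_v f zb) 0 i.
  apply: cvg_trans L; apply: cvg_fmap2; apply: within_subset => x /=.
  by move=> /gt_eqF ->.
have : ('D_v f zb) 0 i <= f z 0 i - f zb 0 i.
  apply: (cvgr_to_le L'); near=> h.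
  have h0 : 0 < h by near: h; exact: nbhs_right_gt.
  have h1 : h < 1 by near: h; exact: nbhs_right_lt.
  have E : h *: v + zb = h *: z + (1 - h) *: zb.
    by rewrite /v scalerBr scalerBl scale1r addrA addrAC.
  rewrite /= E !mxE.
  idtac.
  have := cf i z zb h Pz Pzb.
  rewrite (ltW h0) (ltW h1) => /(_ isT) H.
  rewrite ler_pdivrMl //.
  nra.
rewrite deriveEjacobian // /v => Hd; rewrite /lin_approx mxE.
lra.
Unshelve. all: by end_near.
Qed.
Arguments first_order {R N m f P zb z} i.


Notation fullI K := (@setTfor 'I_K).

Definition suppw (R : realType) K (I : {set 'I_K}) (w : 'I_K -> R) :=
  (forall i, 0 <= w i) /\ \sum_(i < K) w i = 1 /\ (forall i, i \notin I -> w i = 0).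
Arguments suppw {R K}.

Definition chull (R : realType) N K (p : 'I_K -> 'rV[R]_N) (I : {set 'I_K}) : set 'rV[R]_N :=
  [set z | exists w, suppw I w /\ z = \sum_(i < K) w i *: p i].
Arguments chull {R N K}.

Lemma sum_dropR (R : realType) K (a : 'I_K -> R) j :
  \sum_(i < K) (if i == j then 0 else a i) = \sum_(i < K) a i - a j.
Proof.
rewrite [in RHS](bigD1 j) //= (bigD1 j) //= eqxx add0r (addrC (a j)) addrK.
by apply: eq_bigr => i /negbTE ->.
Qed.
Arguments sum_dropR {R}.

Lemma sum_dropV (R : realType) N K (a : 'I_K -> R) (p : 'I_K -> 'rV[R]_N) j :
  \sum_(i < K) (if i == j then 0 else a i) *: p i = \sum_(i < K) a i *: p i - a j *: p j.
Proof.
rewrite [in RHS](bigD1 j) //= (bigD1 j) //= eqxx scale0r add0r (addrC (a j *: _)) addrK.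
by apply: eq_bigr => i /negbTE ->.
Qed.
Arguments sum_dropV {R}.

Lemma w_le1 (R : realType) K (w : 'I_K -> R) j :
  (forall i, 0 <= w i) -> \sum_(i < K) w i = 1 -> w j <= 1.
Proof.
move=> w0 w1; rewrite -w1 (bigD1 j) //= lerDl; exact: sumr_ge0.
Qed.
Arguments w_le1 {R K w} j.

Lemma comb_one (R : realType) N K (w : 'I_K -> R) (p : 'I_K -> 'rV[R]_N) j :
  (forall i, 0 <= w i) -> \sum_(i < K) w i = 1 -> w j = 1 ->
  \sum_(i < K) w i *: p i = p j.
Proof.
move=> w0 w1 wj.
have : \sum_(i < K | i != j) w i = 0.
  by move: w1; rewrite (bigD1 j) //= wj; lra.
move/psumr_eq0P => /(_ (fun i _ => w0 i)) H.
rewrite (bigD1 j) //= wj scale1r big1 ?addr0 // => i ij.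
by rewrite H // scale0r.
Qed.
Arguments comb_one {R N K w} p {j}.

Lemma chull_sub (R : realType) N K (p : 'I_K -> 'rV[R]_N) (I J : {set 'I_K}) :
  I \subset J -> chull p I `<=` chull p J.
Proof.
move=> IJ z [w [[w0 [w1 wI]] ->]]; exists w; split => //; split => //; split => // i iJ.
by apply: wI; apply/negP => /(fintype.subsetP IJ); apply/negP.
Qed.
Arguments chull_sub {R N K p I J}.

Lemma pt_in (R : realType) N K (p : 'I_K -> 'rV[R]_N) j :
  chull p (fullI K) (p j).
Proof.
exists (fun i => (i == j)%:R); split; last first.
  rewrite (bigD1 j) //= eqxx scale1r big1 ?addr0 // => i /negbTE ->.
  by rewrite scale0r.
split; first by move=> i; rewrite ler0n.
split; last by move=> i; rewrite inE.
rewrite (bigD1 j) //= eqxx big1 ?addr0 // => i /negbTE ->.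
done.
Qed.
Arguments pt_in {R N K} p j.

Definition convex_fun_on (R : realType) N (P : set 'rV[R]_N) (g : 'rV[R]_N -> R) :=
  forall x y t, P x -> P y -> 0 <= t <= 1 ->
    g (t *: x + (1 - t) *: y) <= t * g x + (1 - t) * g y.
Arguments convex_fun_on {R N}.

Lemma jensenA (R : realType) N K (p : 'I_K -> 'rV[R]_N) (g : 'rV[R]_N -> R) M :
  convex_fun_on (chull p (fullI K)) g ->
  forall I : {set 'I_K}, (forall i, i \in I -> g (p i) <= M) ->
  forall z, chull p I z -> g z <= M.
Proof.
move=> cg I; move: {2}#|I| (erefl #|I|) => k.
elim: k I => [|k IH] I cI hI z [w [[w0 [w1 wI]] ->]].
  exfalso; move: w1; rewrite big1 => [/eqP|i _]; first by rewrite eq_sym oner_eq0.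
  by apply: wI; rewrite (cards0_eq cI) inE.
have /card_gt0P [j jI] : (0 < #|I|)%N by rewrite cI.
have wj1 := w_le1 j w0 w1.
case: (w j =P 1) => [wj | wjn].
  by rewrite (comb_one p w0 w1 wj); apply: hI.
have wjl : w j < 1 by rewrite lt_neqAle wj1 andbT; apply/eqP.
have wj0 : 0 < 1 - w j by rewrite subr_gt0.
set a := fun i => (1 - w j)^-1 * w i.
set w' := fun i => if i == j then 0 else a i.
set z' := \sum_(i < K) w' i *: p i.
have sw' : suppw (I :\ j) w'.
  split; first by move=> i; rewrite /w' /a; case: (i == j) => //; apply: mulr_ge0 => //; rewrite invr_ge0 ltW.
  split; first by rewrite /w' sum_dropR /a -mulr_sumr w1 -mulrBr mulVf // gt_eqF.
  move=> i; rewrite /w' !inE negb_and negbK; case: eqP => //= _ /wI.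
  by rewrite /a => ->; rewrite mulr0.
have Pz' : chull p (fullI K) z'.
  apply: (chull_sub (finset.subsetT (I :\ j))); exists w'; split => //.
have Ez : \sum_(i < K) w i *: p i = w j *: p j + (1 - w j) *: z'.
  have E1 : z' = (1 - w j)^-1 *: (\sum_(i < K) w i *: p i - w j *: p j).
    rewrite /z' /w' sum_dropV /a scalerBr scaler_sumr; congr (_ - _).
      by apply: eq_bigr => i _; rewrite scalerA.
    by rewrite scalerA.
  by rewrite E1 scalerA mulfV ?gt_eqF // scale1r addrC subrK.
have gz' : g z' <= M.
  apply: (IH (I :\ j)) => //.
    by move: cI; rewrite (cardsD1 j) jI add1n => -[].
  by move=> i; rewrite inE => /andP [_ /hI].
  by exists w'.
rewrite Ez; apply: (le_trans (cg _ _ _ (pt_in p j) Pz' _)).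
  by rewrite w0 wj1.
have := hI j jI; move: (w0 j) wj1 gz'; nra.
Qed.
Arguments jensenA {R}.

Lemma reduceB (R : realType) N K (p : 'I_K -> 'rV[R]_N) :
  forall k (I : {set 'I_K}), #|I| = k -> chull p (fullI K) `<=` chull p I ->
  exists I' : {set 'I_K}, (forall i, i \in I' -> is_vertex (chull p (fullI K)) (p i)) /\
     chull p (fullI K) `<=` chull p I'.
Proof.
set P := chull p (fullI K).
elim=> [|k IH] I cI sub.
  exists I; split => // i; by rewrite (cards0_eq cI) inE.
case: (pselect (forall i, i \in I -> is_vertex P (p i))) => [allv|].
  by exists I.
move=> /existsNP [j] /not_implyP [jI nv].
have [x [y [t [Px [Py [tt [Ej nxy]]]]]]] : exists x y t, P x /\ P y /\ 0 < t < 1 /\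
    p j = t *: x + (1 - t) *: y /\ x <> y.
  apply: contra_notP nv => H; split; first exact: pt_in.
  move=> x y t Px Py tt E; apply: contrapT => nxy; apply: H.
  by exists x, y, t.
have [a [[a0 [a1 aI]] Ex]] := sub x Px.
have [b [[b0 [b1 bI]] Ey]] := sub y Py.
have /andP [t0 t1] := tt.
set c := fun i => t * a i + (1 - t) * b i.
have c0 : forall i, 0 <= c i.
  move=> i; rewrite /c; have := a0 i; have := b0 i; nra.
have c1 : \sum_(i < K) c i = 1.
  by rewrite /c big_split /= -!mulr_sumr a1 b1; lra.
have Ec : p j = \sum_(i < K) c i *: p i.
  rewrite Ej Ex Ey.
  rewrite !scaler_sumr.
  rewrite -big_split /=.
  by apply: eq_bigr => i _; rewrite !scalerA -scalerDl.
have cj1 : c j < 1.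
  rewrite lt_neqAle (w_le1 j c0 c1) andbT; apply/eqP => cj.
  have aj1 := w_le1 j a0 a1; have bj1 := w_le1 j b0 b1.
  have aj : a j = 1 by move: cj; rewrite /c; nra.
  have bj : b j = 1 by move: cj; rewrite /c; nra.
  by apply: nxy; rewrite Ex Ey (comb_one p a0 a1 aj) (comb_one p b0 b1 bj).
have cj0 : 0 < 1 - c j by rewrite subr_gt0.
apply: (IH (I :\ j)).
  by move: cI; rewrite (cardsD1 j) jI add1n => -[].
move=> z Pz; have [w [[w0 [w1 wI]] Ez]] := sub z Pz.
set kk := w j / (1 - c j).
have kk0 : 0 <= kk by rewrite /kk divr_ge0 // ltW.
have kkE : w j + kk * c j = kk.
  by rewrite /kk; field; rewrite gt_eqF.
exists (fun i => if i == j then 0 else w i + kk * c i); split; last first.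
  rewrite sum_dropV kkE.
  under eq_bigr do rewrite scalerDl -scalerA.
  by rewrite big_split /= -scaler_sumr -Ec -Ez addrK.
split; first by move=> i; case: (i == j) => //; rewrite addr_ge0 // mulr_ge0.
split; first by rewrite sum_dropR kkE big_split /= -mulr_sumr c1 w1 mulr1 addrK.
move=> i; rewrite !inE negb_and negbK; case: eqP => //= _ iI.
have := wI i iI; have : c i = 0.
  by rewrite /c (aI i iI) (bI i iI) !mulr0 addr0.
by move=> -> ->; rewrite mulr0 addr0.
Qed.

Arguments reduceB {R N K p}.
Arguments jensenA {R N K p g M}.

Lemma vert_bound (R : realType) N K (p : 'I_K -> 'rV[R]_N) (g : 'rV[R]_N -> R) M :
  convex_fun_on (chull p (fullI K)) g ->
  (forall z, is_vertex (chull p (fullI K)) z -> g z <= M) ->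
  forall z, chull p (fullI K) z -> g z <= M.
Proof.
move=> cg hv z Pz.
have [I' [hI' sub]] := reduceB _ _ (erefl #|fullI K|) (fun x (Px : chull p (fullI K) x) => Px).
apply: (jensenA cg I' _ _ (sub _ Pz)).
by move=> i /hI' /hv.
Qed.


Definition Bnd (R : realType) k (xi : 'rV[R]_k) := forall j, -1 <= xi 0 j <= 1.
Arguments Bnd {R k}.

Lemma bnd_row (R : realType) a b (x : 'rV[R]_a) (y : 'rV[R]_b) :
  Bnd (row_mx x y) <-> Bnd x /\ Bnd y.
Proof.
split.
  move=> H; split => j.
    by have := H (lshift b j); rewrite row_mxEl.
  by have := H (rshift a j); rewrite row_mxEr.
move=> [hx hy] j; rewrite -(splitK j); case: (fintype.split j) => k /=.
  by rewrite row_mxEl.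
by rewrite row_mxEr.
Qed.

Lemma CZ_single (R : realType) n (c : 'rV[R]_n) : is_CZ [set c].
Proof.
exists 0%N, 0%N, 0, c, 0, 0; apply/seteqP; split => x /=.
  move=> ->; exists 0; split; first by case.
  by split; [apply/rowP => -[] | rewrite mul0mx add0r].
by move=> [xi [_ [_ ->]]]; rewrite mulmx0 add0r.
Qed.

Lemma CZ_img (R : realType) n p (L : 'M[R]_(n, p)) X : is_CZ X -> is_CZ (mx_img L X).
Proof.
move=> [ng [nc [G [c [A [b ->]]]]]].
exists ng, nc, (G *m L), (c *m L), A, b; apply/seteqP; split => x /=.
  move=> [_ [xi [B [E ->]]] <-]; exists xi; split => //; split => //.
  by rewrite mulmxDl mulmxA.
move=> [xi [B [E ->]]]; exists (xi *m G + c); first by exists xi.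
by rewrite mulmxDl mulmxA.
Qed.

Lemma CZ_neg (R : realType) n (X : set 'rV[R]_n) : is_CZ X -> is_CZ (sneg X).
Proof.
move=> [ng [nc [G [c [A [b ->]]]]]].
exists ng, nc, (- G), (- c), A, b; apply/seteqP; split => x /=.
  move=> [_ [xi [B [E ->]]] <-]; exists xi; split => //; split => //.
  by rewrite mulmxN opprD.
move=> [xi [B [E ->]]]; exists (xi *m G + c); first by exists xi.
by rewrite mulmxN opprD.
Qed.

Lemma CZ_sum (R : realType) n (X W : set 'rV[R]_n) : is_CZ X -> is_CZ W -> is_CZ (msum X W).
Proof.
move=> [ng1 [nc1 [G1 [c1 [A1 [b1 ->]]]]]] [ng2 [nc2 [G2 [c2 [A2 [b2 ->]]]]]].
exists (ng1 + ng2)%N, (nc1 + nc2)%N, (col_mx G1 G2), (c1 + c2), (block_mx A1 0 0 A2), (row_mx b1 b2).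
apply/seteqP; split => z /=.
  move=> [_ [xi1 [B1 [E1 ->]]] [_ [xi2 [B2 [E2 ->]]] <-]].
  exists (row_mx xi1 xi2); split; first exact/bnd_row.
  rewrite mul_row_block mul_row_col !mulmx0 addr0 add0r E1 E2; split => //.
  by rewrite addrACA.
move=> [th [B [E ->]]].
rewrite -(hsubmxK th) in B E *.
move: B E; set xi1 := lsubmx th; set xi2 := rsubmx th => /bnd_row [B1 B2].
rewrite mul_row_block !mulmx0 addr0 add0r => /eq_row_mx [E1 E2].
exists (xi1 *m G1 + c1); first by exists xi1.
exists (xi2 *m G2 + c2); first by exists xi2.
by rewrite mul_row_col addrACA.
Qed.

Lemma CZ_ginter (R : realType) n p (X : set 'rV[R]_n) (M : 'M[R]_(n, p)) W :
  is_CZ X -> is_CZ W -> is_CZ (ginter X M W).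
Proof.
move=> [ng1 [nc1 [G1 [c1 [A1 [b1 ->]]]]]] [ng2 [nc2 [G2 [c2 [A2 [b2 ->]]]]]].
exists (ng1 + ng2)%N, (nc1 + (nc2 + p))%N, (col_mx G1 0), c1,
  (col_mx (row_mx A1 (row_mx 0 (G1 *m M))) (row_mx 0 (row_mx A2 (- G2)))),
  (row_mx b1 (row_mx b2 (c2 - c1 *m M))).
apply/seteqP; split => z /=.
  move=> [[xi1 [B1 [E1 ->]]] [xi2 [B2 [E2 E3]]]].
  exists (row_mx xi1 xi2); split; first exact/bnd_row.
  rewrite mul_row_col !mul_mx_row !mulmx0 mulmxN add_row_mx addr0 add_row_mx add0r E1 E2.
  split; last by rewrite mul_row_col mulmx0 addr0.
  congr (row_mx _ (row_mx _ _)).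
  move: E3; rewrite mulmxDl -mulmxA.
  set u1 := xi1 *m (G1 *m M); set u2 := xi2 *m G2; set u3 := c1 *m M => E3.
  by apply/rowP => k; have := congr1 (fun u : 'rV[R]_p => u 0 k) E3; rewrite !mxE; lra.
move=> [th [B [E ->]]].
rewrite -(hsubmxK th) in B E *.
move: B E; set xi1 := lsubmx th; set xi2 := rsubmx th => /bnd_row [B1 B2].
rewrite mul_row_col !mul_mx_row !mulmx0 mulmxN add_row_mx addr0 add_row_mx add0r.
move=> /eq_row_mx [E1 /eq_row_mx [E2 E3]].
rewrite mul_row_col mulmx0 addr0; split; first by exists xi1.
exists xi2; split => //; split => //.
rewrite mulmxDl -mulmxA.
move: E3; set u1 := xi1 *m (G1 *m M); set u2 := xi2 *m G2; set u3 := c1 *m M => E3.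
by apply/rowP => k; have := congr1 (fun u : 'rV[R]_p => u 0 k) E3; rewrite !mxE; lra.
Qed.


Lemma conv_hull_eq (R : realType) N (S : seq 'rV[R]_N) :
  conv_hull S = chull (fun i : 'I_(size S) => S`_i) (fullI (size S)).
Proof.
apply/seteqP; split => z /=.
  move=> [w [w0 [w1 ->]]]; exists w; split => //; split => //; split => // i.
  by rewrite inE.
by move=> [w [[w0 [w1 _]] ->]]; exists w.
Qed.

Lemma chull_convex (R : realType) N K (p : 'I_K -> 'rV[R]_N) :
  convex_set (chull p (fullI K)).
Proof.
move=> x y t [a [[a0 [a1 _]] ->]] [b [[b0 [b1 _]] ->]] /andP [t0 t1].
exists (fun i => t * a i + (1 - t) * b i); split.
  split; first by move=> i; have := a0 i; have := b0 i; nra.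
  split; last by move=> i; rewrite inE.
  by rewrite big_split /= -!mulr_sumr a1 b1; lra.
rewrite !scaler_sumr -big_split /=.
by apply: eq_bigr => i _; rewrite !scalerA -scalerDl.
Qed.

Lemma lin_affine (R : realType) n m (f : 'rV[R]_n -> 'rV[R]_m) zb x y t :
  lin_approx f zb (t *: x + (1 - t) *: y) =
  t *: lin_approx f zb x + (1 - t) *: lin_approx f zb y.
Proof.
rewrite /lin_approx !mulmxBl !mulmxDl -!scalemxAl.
set X := x *m _; set Y := y *m _; set Z := zb *m _; set F := f zb.
by apply/rowP => k; rewrite !mxE; ring.
Qed.

Lemma box_in (R : realType) m (em ep r : 'rV[R]_m) :
  (forall i, em 0 i <= r 0 i <= ep 0 i) ->
  Zset (diag_mx ((2%:R)^-1 *: (ep - em))) ((2%:R)^-1 *: (em + ep)) r.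
Proof.
move=> hr.
exists (\row_j (if ep 0 j == em 0 j then 0 else
   (r 0 j - 2%:R^-1 * (em 0 j + ep 0 j)) / (2%:R^-1 * (ep 0 j - em 0 j)))).
split.
  move=> j; rewrite mxE; case: eqP => [_|ne]; first by apply/andP; split; lra.
  have /andP [h1 h2] := hr j.
  have lt : em 0 j < ep 0 j.
    by rewrite lt_neqAle (le_trans h1 h2) andbT; apply/eqP => e; apply: ne; rewrite e.
  have d0 : 0 < 2%:R^-1 * (ep 0 j - em 0 j) by rewrite mulr_gt0 // ?invr_gt0 ?ltr0n // subr_gt0.
  by rewrite ler_pdivlMr // ler_pdivrMr //; apply/andP; split; lra.
split; first by rewrite mulmx0.
apply/rowP => j; rewrite mul_mx_diag !mxE; case: eqP => [e|ne].
  by have := hr j; rewrite e; lra.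
have d0 : 2%:R^-1 * (ep 0 j - em 0 j) != 0.
  by rewrite mulf_neq0 // ?invr_eq0 ?pnatr_eq0 // subr_eq0; apply/eqP.
by rewrite divfK // subrK.
Qed.


Lemma entry_comb (R : realType) p q (A B : 'M[R]_(p, q)) (t s : R) i j :
  (t *: A + s *: B) i j = t * A i j + s * B i j.
Proof. by rewrite !mxE. Qed.

Lemma conv_g_up (R : realType) N m (P : set 'rV[R]_N) (fa fb fc : 'rV[R]_N -> 'rV[R]_m) zb1 zb2 i :
  cw_convex_on P fa ->
  convex_fun_on P (fun z => fa z 0 i - lin_approx fb zb1 z 0 i - lin_approx fc zb2 z 0 i).
Proof.
move=> cA a b t Pa Pb tt; rewrite !lin_affine.
have := cA i a b t Pa Pb tt.
move: (lin_approx fb zb1 a) (lin_approx fb zb1 b) (lin_approx fc zb2 a) (lin_approx fc zb2 b).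
move: (fa (t *: a + (1 - t) *: b)) (fa a) (fa b) => F0 F1 F2 L1 L2 L3 L4.
rewrite !entry_comb; move: tt; nra.
Qed.

Lemma conv_g_lo (R : realType) N m (P : set 'rV[R]_N) (fa fb fc : 'rV[R]_N -> 'rV[R]_m) zb1 zb2 i :
  cw_convex_on P fb ->
  convex_fun_on P (fun z => - (lin_approx fa zb1 z 0 i - fb z 0 i - lin_approx fc zb2 z 0 i)).
Proof.
move=> cB a b t Pa Pb tt; rewrite !lin_affine.
have := cB i a b t Pa Pb tt.
move: (lin_approx fa zb1 a) (lin_approx fa zb1 b) (lin_approx fc zb2 a) (lin_approx fc zb2 b).
move: (fb (t *: a + (1 - t) *: b)) (fb a) (fb b) => F0 F1 F2 L1 L2 L3 L4.
rewrite !entry_comb; move: tt; nra.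
Qed.

Lemma vert_bound_hull (R : realType) N (S : seq 'rV[R]_N) g M :
  convex_fun_on (conv_hull S) g ->
  (forall z, is_vertex (conv_hull S) z -> g z <= M) -> forall z, conv_hull S z -> g z <= M.
Proof. rewrite conv_hull_eq; exact: vert_bound. Qed.

Theorem theorem2 (R : realType) (n r m : nat)
  (X : set 'rV[R]_n) (V : set 'rV[R]_r) (y : 'rV[R]_m)
  (h : 'rV[R]_n -> 'rV[R]_r -> 'rV[R]_m)
  (rha rhb : 'rV[R]_(n + r) -> 'rV[R]_m)
  (S : seq 'rV[R]_(n + r)) (zb : 'rV[R]_(n + r))
  (em ep : 'rV[R]_m) :
  is_CZ X -> is_CZ V ->
  let rho := fun z : 'rV[R]_(n + r) => h (lsubmx z) (rsubmx z) in
  let P := conv_hull S in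
  cprod X V `<=` P ->
  (forall z, P z -> rho z = rha z - rhb z) ->
  differentiable_on P rha -> differentiable_on P rhb ->
  cw_convex_on P rha -> cw_convex_on P rhb ->
  P zb ->
  let H := jacobian rho zb in
  let Hx := usubmx H in
  let Hv := dsubmx H in
  let rbar := lin_approx rho zb in
  let rbara := lin_approx rha zb in
  let rbarb := lin_approx rhb zb in
  (forall i : 'I_m,
     (exists z, is_vertex P z /\ em 0 i = rbara z 0 i - rhb z 0 i - rbar z 0 i) /\
     (forall z, is_vertex P z -> em 0 i <= rbara z 0 i - rhb z 0 i - rbar z 0 i)) ->
  (forall i : 'I_m,
     (exists z, is_vertex P z /\ ep 0 i = rha z 0 i - rbarb z 0 i - rbar z 0 i) /\
     (forall z, is_vertex P z -> rha z 0 i - rbarb z 0 i - rbar z 0 i <= ep 0 i)) ->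
  let Rk := Zset (diag_mx ((2%:R)^-1 *: (ep - em))) ((2%:R)^-1 *: (em + ep)) in
  let Y := msum (msum [set y - rho zb + zb *m H] (sneg (mx_img Hv V))) (sneg Rk) in
  let Xb := ginter X Hx Y in
  [set x | X x /\ exists v, V v /\ y = h x v] `<=` Xb /\ is_CZ Xb.
Proof.
move=> hX hV rho P sub Erho dA dB cA cB Pzb H Hx Hv rbar rbara rbarb hem hep Rk Y Xb.
split; last first.
  apply: CZ_ginter => //; apply: CZ_sum; last apply: CZ_neg.
    by apply: CZ_sum; [exact: CZ_single | apply: CZ_neg; exact: CZ_img].
  by rewrite /Rk /Zset; do 6 eexists.
move=> x [Xx [v [Vv Ey]]].
set z := row_mx x v.
have Pz : P z by apply: sub; rewrite /cprod /= row_mxKl row_mxKr.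
have rz : rho z = y by rewrite /rho row_mxKl row_mxKr.
have cvP : convex_set P by rewrite /P conv_hull_eq; exact: chull_convex.
have bnd : forall i, em 0 i <= (rho z - rbar z) 0 i <= ep 0 i.
  move=> i.
  have Ez : (rho z - rbar z) 0 i = rha z 0 i - rhb z 0 i - rbar z 0 i.
    by rewrite (Erho z Pz) !mxE.
  have fa := first_order i cvP cA (dA zb Pzb) Pzb Pz.
  have fb := first_order i cvP cB (dB zb Pzb) Pzb Pz.
  rewrite Ez; apply/andP; split.
    have : em 0 i <= rbara z 0 i - rhb z 0 i - rbar z 0 i.
      pose g := fun z => - (rbara z 0 i - rhb z 0 i - rbar z 0 i).
      suff : g z <= - em 0 i by rewrite /g lerN2.
      apply: (@vert_bound_hull R _ S g) => //; last first.
        by move=> w /(proj2 (hem i)); rewrite /g lerN2.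
      exact: (@conv_g_lo R _ m P rha rhb rho zb zb i cB).
    by move=> He; apply: (le_trans He); rewrite !lerD2r; exact: fa.
  have : rha z 0 i - rbarb z 0 i - rbar z 0 i <= ep 0 i.
    pose g := fun z => rha z 0 i - rbarb z 0 i - rbar z 0 i.
    apply: (@vert_bound_hull R _ S g) => //; last first.
      by move=> w /(proj2 (hep i)).
    exact: (@conv_g_up R _ m P rha rhb rho zb zb i cA).
  by move=> He; apply: le_trans He; rewrite lerD2r lerD2l lerN2; exact: fb.
have Rr : Rk (rho z - rbar z) by apply: box_in.
split => //.
exists (y - rho zb + zb *m H - v *m Hv).
  exists (y - rho zb + zb *m H) => //.
  by exists (- (v *m Hv)) => //; exists (v *m Hv) => //; exists v.
exists (- (rho z - rbar z)); first by exists (rho z - rbar z).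
have zH : z *m H = x *m Hx + v *m Hv by rewrite -{1}(vsubmxK H) mul_row_col.
rewrite rz /rbar /lin_approx mulmxBl zH -/(rho zb).
move: (x *m Hx) (v *m Hv) (zb *m H) (rho zb) => A B C D.
by apply/rowP => k; rewrite !mxE; ring.
Qed.
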